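(* Let $1<a<b$ be coprime integers and let $D,E\subseteq G$ be subdiagrams. Then \[ B(\mathbf{1}_D,\mathbf{1}_E)=\mathtt{dinv}(D,E), \] where $\mathbf{1}_D,\mathbf{1}_E\in\mathbb{R}^G$ are the indicator vectors of $D$ and $E$.
   Context: Fix coprime integers $1<a<b$. Work in the grid $\mathbb{Z}^2$, with $+x$ pointing east and $+y$ pointing north; elements of $\mathbb{Z}^2$ are called cells. Let $g:\mathbb{Z}^2\to\mathbb{Z}$, $g(x,y)=ab-ax-by$. For a cell $c=(x,y)$ and an integer $k$, write $c-ka:=(x+k,y)$ and $c-kb:=(x,y+k)$. Let $G=\{(x,y)\in\mathbb{Z}_{\ge1}^2: g(x,y)>0\}$. A subdiagram is a subset $D\subseteq G$ such that whenever $(x,y)\in D$, $(x',y')\in G$, $x'\le x$ and $y'\le y$, we have $(x',y')\in D$. Define $K(d)=\mathbf{1}_{d\ge0}-\mathbf{1}_{d\ge a}-\mathbf{1}_{d\ge b}+\mathbf{1}_{d\ge a+b}$ for $d\in\mathbb{Z}$, the quadratic form $Q(\mathbf{n})=\sum_{i,j\in G}K(g(j)-g(i))\,n_in_j$ on $\mathbb{R}^G$, and let $B$ be the unique symmetric bilinear form on $\mathbb{R}^G$ with $B(\mathbf{n},\mathbf{n})=Q(\mathbf{n})$, namely \[ B(\mathbf{n},\mathbf{n}')=\tfrac12\sum_{i,j\in G}K(g(j)-g(i))\,(n_in'_j+n'_in_j). \] For a subdiagram $D$ and $c\in D$, let $\mathrm{arm}_D(c)=\max\{k\ge0: c-ka\in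 D\}$ and $\mathrm{leg}_D(c)=\max\{k\ge 0: c-kb\in D\}$. For subdiagrams $D,E$ and $c\in D\cap E$ define the mixed cross hook slopes \[ m_D^E(c)=\frac{\mathrm{leg}_E(c)}{\mathrm{arm}_D(c)+1},\qquad M_D^E(c)=\frac{\mathrm{leg}_E(c)+1}{\mathrm{arm}_D(c)}\] (with $M_D^E(c)=+\infty$ if $\mathrm{arm}_D(c)=0$), and the cross-dinv \[ \mathtt{dinv}(D,E)=\tfrac12\Big(\#\{c\in D\cap E: m_D^E(c)<\tfrac ab<M_D^E(c)\}+\#\{c\in D\cap E: m_E^D(c)<\tfrac ab<M_E^D(c)\}\Big). \] *)

(* Defs.v *)
From mathcomp Require Import all_boot all_order all_algebra.
Set Implicit Arguments. Unset Strict Implicit. Unset Printing Implicit Defensive.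
Import Order.TTheory GRing.Theory Num.Theory.
Local Open Scope ring_scope.

(* Cells are pairs (x, y) of naturals; every cell of G (and hence of every
   subdiagram) has x, y >= 1, so nothing is lost by using nat coordinates.
   The shifts c - k a = (x + k, y), c - k b = (x, y + k) only increase
   coordinates. *)
Definition cell := (nat * nat)%type.

Definition gfun (a b : nat) (c : cell) : int :=
  (a * b)%:Z - (a * c.1)%:Z - (b * c.2)%:Z.

Definition inG (a b : nat) (c : cell) : bool :=
  [&& (0 < c.1)%N, (0 < c.2)%N & 0 < gfun a b c].

(* Enumeration of G: g(x,y) > 0 forces a x < a b and b y < a b, i.e.
   x < b and y < a, so G is contained in [0,b) x [0,a). *)
Definition Gseq (a b : nat) : seq cell :=
  [seq c <- [seq (x, y) | x <- iota 0 b, y <- iota 0 a] | inG a b c].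

Definition Kfun (a b : nat) (d : int) : int :=
  ((0 <= d) : int) - ((a%:Z <= d) : int) - ((b%:Z <= d) : int)
  + (((a + b)%N%:Z <= d) : int).

Definition Bform (R : realFieldType) (a b : nat) (n n' : cell -> R) : R :=
  2^-1 * \sum_(i <- Gseq a b) \sum_(j <- Gseq a b)
     (Kfun a b (gfun a b j - gfun a b i))%:~R * (n i * n' j + n' i * n j).

Definition indic (R : realFieldType) (D : pred cell) : cell -> R :=
  fun c => (D c)%:R.

Definition subdiagram (a b : nat) (D : pred cell) : Prop :=
  (forall c, D c -> inG a b c) /\
  (forall x y x' y' : nat, D (x, y) -> inG a b (x', y') ->
     (x' <= x)%N -> (y' <= y)%N -> D (x', y')).

(* arm_D(c) = max{k >= 0 : c - k a in D}; for D inside G any such k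
   satisfies x + k < b, so k ranges over [0, b). *)
Definition arm (b : nat) (D : pred cell) (c : cell) : nat :=
  \max_(k < b | D (c.1 + k, c.2)%N) k.

(* leg_D(c) = max{k >= 0 : c - k b in D}; here y + k < a. *)
Definition leg (a : nat) (D : pred cell) (c : cell) : nat :=
  \max_(k < a | D (c.1, c.2 + k)%N) k.

(* m_D^E(c) < a/b < M_D^E(c), with M = +infinity when arm_D(c) = 0 *)
Definition slope_cond (R : realFieldType) (a b : nat) (D E : pred cell)
    (c : cell) : bool :=
  ((leg a E c)%:R / (arm b D c).+1%:R < a%:R / b%:R :> R) &&
  ((arm b D c == 0)%N ||
   (a%:R / b%:R < (leg a E c).+1%:R / (arm b D c)%:R :> R)).

Definition dinv (R : realFieldType) (a b : nat) (D E : pred cell) : R :=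
  2^-1 * ((count (fun c => [&& D c, E c & slope_cond R a b D E c]) (Gseq a b))%:R
        + (count (fun c => [&& D c, E c & slope_cond R a b E D c]) (Gseq a b))%:R).

(* Main.v *)
Require Import Defs.
From mathcomp Require Import all_boot all_order all_algebra zify.
Set Implicit Arguments. Unset Strict Implicit. Unset Printing Implicit Defensive.
Import Order.TTheory GRing.Theory Num.Theory.
Local Open Scope ring_scope.


Definition cterm (a b x y r h : nat) : int :=
  Posz (nat_of_bool ((0 < x <= r) && (0 < y <= h) &&
     (a*x + b*h < a*r + b*y + a) && (a*r + b*y < a*x + b*h + b))%N).

Definition dc (a b x y r h : nat) : int :=
  cterm a b x y r h - cterm a b x y r.-1 h - cterm a b x y r h.-1
  + cterm a b x y r.-1 h.-1.

Ltac dec1 :=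
  match goal with
  | |- context [leq ?x ?y] =>
     first [ have ->: (leq x y) = true by apply/idP; lia
           | have ->: (leq x y) = false by apply/negbTE/negP; lia ]
  | |- context [@Order.le ?d ?T ?x ?y] =>
     first [ have ->: (@Order.le d T x y) = true by apply/idP; lia
           | have ->: (@Order.le d T x y) = false by apply/negbTE/negP; lia ]
  end.

Ltac kern :=
  repeat dec1; rewrite /=;
  first [ lia
        | match goal with
          | |- context [leq ?x ?y] => case: (leqP x y) => ?; kern
          | |- context [@Order.le _ _ ?x ?y] => case: (lerP x y) => ?; kern
          end ].

Lemma kernel (a b u v p q : nat) : (0 < a)%N -> (0 < b)%N ->
  Kfun a b (gfun a b (p.+1, q.+1) - gfun a b (u.+1, v.+1)) +
  Kfun a b (gfun a b (u.+1, v.+1) - gfun a b (p.+1, q.+1)) =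
  dc a b p.+1 v.+1 u.+1 q.+1 + dc a b u.+1 q.+1 p.+1 v.+1.
Proof.
move=> a0 b0.
rewrite /Kfun /gfun /dc /cterm /=.
case: (ltngtP u p) => hup; case: (ltngtP v q) => hvq.
all: try (have hA : (a * u + a <= a * p)%N by nia).
all: try (have hA : (a * p + a <= a * u)%N by nia).
all: try (have hB : (b * v + b <= b * q)%N by nia).
all: try (have hB : (b * q + b <= b * v)%N by nia).
all: try subst.
all: time kern.
Qed.


Definition bz (B : bool) : int := Posz (nat_of_bool B).

Lemma inG_facts a b x y : (0 < a)%N -> (0 < b)%N -> inG a b (x, y) ->
  [/\ (0 < x)%N, (0 < y)%N, (x < b)%N & (y < a)%N].
Proof.
move=> a0 b0 /and3P [/= x0 y0 g0].
have h : (a * x + b * y < a * b)%N.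
  move: g0; rewrite /gfun /=; lia.
split=> //.
- by rewrite -(ltn_pmul2l a0); lia.
- by rewrite -(ltn_pmul2l b0) [(b * a)%N]mulnC; lia.
Qed.

Lemma inG_mono a b x y x' y' : inG a b (x, y) -> (0 < x' <= x)%N -> (0 < y' <= y)%N ->
  inG a b (x', y').
Proof.
move=> /and3P [/= x0 y0 g0] /andP[x'0 hx] /andP[y'0 hy].
apply/and3P; split=> //=.
move: g0; rewrite /gfun /=.
have : (a * x' <= a * x)%N by rewrite leq_mul2l hx orbT.
have : (b * y' <= b * y)%N by rewrite leq_mul2l hy orbT.
lia.
Qed.

Definition rD (b : nat) (D : pred cell) (y : nat) : nat := \max_(x < b | D (val x, y)) x.
Definition hE (a : nat) (E : pred cell) (x : nat) : nat := \max_(y < a | E (x, val y)) y.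

Lemma rD_lt b D y : (0 < b)%N -> (rD b D y < b)%N.
Proof.
move=> b0; rewrite /rD; have: (\max_(x < b | D (val x, y)) x <= b.-1)%N.
  by apply/bigmax_leqP => i _; rewrite -ltnS prednK.
by rewrite -ltnS prednK.
Qed.

Lemma hE_lt a E x : (0 < a)%N -> (hE a E x < a)%N.
Proof.
move=> a0; rewrite /hE; have: (\max_(y < a | E (x, val y)) y <= a.-1)%N.
  by apply/bigmax_leqP => i _; rewrite -ltnS prednK.
by rewrite -ltnS prednK.
Qed.

Lemma row_char a b D x y : (0 < a)%N -> (0 < b)%N -> subdiagram a b D ->
  D (x, y) = (0 < x <= rD b D y)%N.
Proof.
move=> a0 b0 [DG Ddown]; apply/idP/idP.
- move=> Dxy; have [x0 _ xb _] := inG_facts a0 b0 (DG _ Dxy).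
  rewrite x0 /=.
  exact: (leq_bigmax_cond (F := fun i : 'I_b => nat_of_ord i) (Ordinal xb) Dxy).
- case/andP=> x0 xr.
  case: (boolP [exists i : 'I_b, D (val i, y) && (x <= i)%N]).
  + case/existsP=> i /andP[Di xi].
    apply: (Ddown (val i) y x y Di _ xi (leqnn y)).
    have [_ y0 _ _] := inG_facts a0 b0 (DG _ Di).
    apply: (inG_mono (DG _ Di)); apply/andP; split=> //.
  + rewrite negb_exists => /forallP H.
    have : (rD b D y <= x.-1)%N.
      apply/bigmax_leqP => i Di; have := H i; rewrite Di /= -ltnNge.
      by move=> hi; rewrite -ltnS prednK.
    by move=> hr; move: xr; lia.
Qed.

Lemma col_char a b E x y : (0 < a)%N -> (0 < b)%N -> subdiagram a b E ->
  E (x, y) = (0 < y <= hE a E x)%N.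
Proof.
move=> a0 b0 [EG Edown]; apply/idP/idP.
- move=> Exy; have [_ y0 _ ya] := inG_facts a0 b0 (EG _ Exy).
  rewrite y0 /=.
  exact: (leq_bigmax_cond (F := fun i : 'I_a => nat_of_ord i) (Ordinal ya) Exy).
- case/andP=> y0 yr.
  case: (boolP [exists i : 'I_a, E (x, val i) && (y <= i)%N]).
  + case/existsP=> i /andP[Ei yi].
    apply: (Edown x (val i) x y Ei _ (leqnn x) yi).
    have [x0 _ _ _] := inG_facts a0 b0 (EG _ Ei).
    apply: (inG_mono (EG _ Ei)); apply/andP; split=> //.
  + rewrite negb_exists => /forallP H.
    have : (hE a E x <= y.-1)%N.
      apply/bigmax_leqP => i Ei; have := H i; rewrite Ei /= -ltnNge.
      by move=> hi; rewrite -ltnS prednK.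
    by move=> hr; move: yr; lia.
Qed.

Lemma max_le n m : (m < n)%N -> \max_(k < n | (k <= m)%N) k = m.
Proof.
move=> mn; apply/eqP; rewrite eqn_leq; apply/andP; split.
  by apply/bigmax_leqP.
exact: (leq_bigmax_cond (F := fun i : 'I_n => nat_of_ord i) (Ordinal mn) (leqnn m)).
Qed.

Lemma arm_eq a b D x y : (0 < a)%N -> (0 < b)%N -> subdiagram a b D -> D (x, y) ->
  arm b D (x, y) = (rD b D y - x)%N.
Proof.
move=> a0 b0 sD Dxy.
have := Dxy; rewrite (row_char _ _ a0 b0 sD) => /andP[x0 xr].
rewrite /arm /=.
rewrite (eq_bigl (fun k : 'I_b => (k <= rD b D y - x)%N)); last first.
  by move=> k /=; rewrite (row_char _ _ a0 b0 sD); lia.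
apply: max_le; have := rD_lt D y b0; lia.
Qed.

Lemma leg_eq a b E x y : (0 < a)%N -> (0 < b)%N -> subdiagram a b E -> E (x, y) ->
  leg a E (x, y) = (hE a E x - y)%N.
Proof.
move=> a0 b0 sE Exy.
have := Exy; rewrite (col_char _ _ a0 b0 sE) => /andP[y0 yr].
rewrite /leg /=.
rewrite (eq_bigl (fun k : 'I_a => (k <= hE a E x - y)%N)); last first.
  by move=> k /=; rewrite (col_char _ _ a0 b0 sE); lia.
apply: max_le; have := hE_lt E x a0; lia.
Qed.

Lemma slope_arith (R : realFieldType) (a b L Ar : nat) : (0 < a)%N -> (0 < b)%N ->
  ((L%:R / Ar.+1%:R < a%:R / b%:R :> R) &&
   ((Ar == 0)%N || (a%:R / b%:R < L.+1%:R / Ar%:R :> R))) =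
  ((L * b < a * Ar.+1) && (a * Ar < b * L.+1))%N.
Proof.
move=> a0 b0.
have bp : 0 < b%:R :> R by rewrite ltr0n.
congr andb.
  rewrite ltr_pdivrMr ?ltr0n // mulrAC ltr_pdivlMr // -!natrM ltr_nat.
  by [].
case: Ar => [|Ar]; first by rewrite /= [(a * 0)%N]muln0 muln_gt0 b0.
rewrite /= ltr_pdivrMr // mulrAC ltr_pdivlMr ?ltr0n // -!natrM ltr_nat.
by rewrite [(L.+1 * b)%N]mulnC.
Qed.


Lemma cterm_char (R : realFieldType) a b D E x y : (0 < a)%N -> (0 < b)%N ->
  subdiagram a b D -> subdiagram a b E ->
  cterm a b x y (rD b D y) (hE a E x) =
  bz [&& D (x, y), E (x, y) & slope_cond R a b D E (x, y)].
Proof.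
move=> a0 b0 sD sE.
rewrite /cterm /bz.
case Dxy: (D (x, y)); last first.
  by move: Dxy; rewrite (row_char _ _ a0 b0 sD) => ->.
case Exy: (E (x, y)); last first.
  by move: Exy; rewrite (col_char _ _ a0 b0 sE) => ->; rewrite andbF.
have := Dxy; rewrite (row_char _ _ a0 b0 sD) => hD.
have := Exy; rewrite (col_char _ _ a0 b0 sE) => hE'.
rewrite hD hE' /= /slope_cond (arm_eq a0 b0 sD Dxy) (leg_eq a0 b0 sE Exy) slope_arith //.
move: hD hE' => /andP[x0 xr] /andP[y0 yh].
have [k ->] : exists k, rD b D y = (x + k)%N by exists (rD b D y - x)%N; lia.
have [m ->] : exists m, hE a E x = (y + m)%N by exists (hE a E x - y)%N; lia.
rewrite !addKn.
congr (Posz (nat_of_bool _)).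
rewrite !mulnDr !mulnS; apply/idP/idP; case/andP=> h1 h2; apply/andP; split; lia.
Qed.

Lemma count_bz (T : Type) (P : pred T) (s : seq T) :
  (count P s)%:Z = \sum_(i <- s) bz (P i).
Proof.
elim: s => [|x s IH]; first by rewrite big_nil.
by rewrite big_cons /= PoszD IH.
Qed.

Lemma sumG a b (P : pred cell) (F : cell -> int) : (forall c, P c -> inG a b c) ->
  \sum_(i <- Gseq a b) bz (P i) * F i =
  \sum_(x <- iota 0 b) \sum_(y <- iota 0 a) bz (P (x, y)) * F (x, y).
Proof.
move=> PG; rewrite /Gseq big_filter big_mkcond big_allpairs.
apply: eq_bigr => x _; apply: eq_bigr => y _.
case: ifP => // hG; case hP: (P (x, y)); last by rewrite /bz /= mul0r.
by rewrite (PG _ hP) in hG.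
Qed.

Lemma tele (f : nat -> int) n r : (r < n)%N ->
  \sum_(x <- iota 0 n) bz (0 < x <= r)%N * (f x - f x.-1) = f r - f 0%N.
Proof.
move=> rn.
have gen : forall m, \sum_(x <- iota 0 m.+1) bz (0 < x <= r)%N * (f x - f x.-1)
   = f (minn r m) - f 0%N.
  elim=> [|m IH]; first by rewrite big_cons big_nil minn0 subrr /bz /= mul0r addr0.
  rewrite -addn1 iotaD big_cat /= IH big_cons big_nil addr0 add0n.
  rewrite /bz; case: (leqP m.+1 r) => hm.
    by rewrite (minn_idPr (ltnW hm)) /= mul1r; lia.
  by rewrite (minn_idPl (ltnSE hm)) andbF mul0r addr0.
case: n rn => [//|n] rn.
by rewrite gen (minn_idPl _) //; lia.
Qed.


Lemma bzA x y : bz (x && y) = bz x * bz y.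
Proof. by case: x; case: y; rewrite /bz /= ?mul1r ?mul0r. Qed.

Lemma cterm_r0 a b x y h : cterm a b x y 0 h = 0.
Proof. by rewrite /cterm; have -> : (0 < x <= 0)%N = false by lia. Qed.

Lemma cterm_h0 a b x y r : cterm a b x y r 0 = 0.
Proof. rewrite /cterm; have -> : (0 < y <= 0)%N = false by lia. by rewrite andbF. Qed.

Lemma dc_split a b x y r h : dc a b x y r h =
  (cterm a b x y r h - cterm a b x y r.-1 h) - (cterm a b x y r h.-1 - cterm a b x y r.-1 h.-1).
Proof. rewrite /dc; lia. Qed.

Lemma point_tele a b D E x y : (0 < a)%N -> (0 < b)%N ->
  subdiagram a b D -> subdiagram a b E ->
  \sum_(xi <- iota 0 b) bz (D (xi, y)) *
     \sum_(yj <- iota 0 a) bz (E (x, yj)) * dc a b x y xi yj =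
  cterm a b x y (rD b D y) (hE a E x).
Proof.
move=> a0 b0 sD sE.
transitivity (\sum_(xi <- iota 0 b) bz (0 < xi <= rD b D y)%N *
   ((cterm a b x y xi (hE a E x) - cterm a b x y xi.-1 (hE a E x)))).
  apply: eq_bigr => xi _; rewrite (row_char _ _ a0 b0 sD); congr (_ * _).
  under eq_bigr => yj _ do rewrite (col_char _ _ a0 b0 sE) dc_split.
  rewrite (tele (fun h => cterm a b x y xi h - cterm a b x y xi.-1 h) (hE_lt E x a0)).
  by rewrite !cterm_h0 subrr subr0.
by rewrite (tele (fun r => cterm a b x y r (hE a E x)) (rD_lt D y b0)) cterm_r0 subr0.
Qed.

Lemma core (R : realFieldType) a b D E : (0 < a)%N -> (0 < b)%N ->
  subdiagram a b D -> subdiagram a b E ->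
  \sum_(i <- Gseq a b) \sum_(j <- Gseq a b) bz (D i) * (bz (E j) * dc a b j.1 i.2 i.1 j.2) =
  (count (fun c => [&& D c, E c & slope_cond R a b D E c]) (Gseq a b))%:Z.
Proof.
move=> a0 b0 sD sE.
have DG := sD.1; have EG := sE.1.
rewrite count_bz.
have -> : \sum_(c <- Gseq a b) bz [&& D c, E c & slope_cond R a b D E c] =
  \sum_(x <- iota 0 b) \sum_(y <- iota 0 a) \sum_(xi <- iota 0 b) bz (D (xi, y)) *
     \sum_(yj <- iota 0 a) bz (E (x, yj)) * dc a b x y xi yj.
  under eq_bigr => c _ do rewrite bzA.
  rewrite (sumG _ DG).
  apply: eq_bigr => x _; apply: eq_bigr => y _.
  by rewrite -bzA -(cterm_char R x y a0 b0 sD sE) -(point_tele x y a0 b0 sD sE).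
under eq_bigr => i _ do rewrite -mulr_sumr.
rewrite (sumG _ DG).
under eq_bigr => xi _ do under eq_bigr => yi _ do rewrite /= (sumG _ EG) mulr_sumr.
under eq_bigr => xi _ do rewrite exchange_big.
rewrite exchange_big.
apply: eq_bigr => xj _; rewrite exchange_big.
apply: eq_bigr => yi _; apply: eq_bigr => xi _.
by rewrite /=.
Qed.


Lemma main_int (R : realFieldType) a b D E : (0 < a)%N -> (0 < b)%N ->
  subdiagram a b D -> subdiagram a b E ->
  \sum_(i <- Gseq a b) \sum_(j <- Gseq a b)
     Kfun a b (gfun a b j - gfun a b i) * (bz (D i) * bz (E j) + bz (E i) * bz (D j)) =
  (count (fun c => [&& D c, E c & slope_cond R a b D E c]) (Gseq a b))%:Z +
  (count (fun c => [&& D c, E c & slope_cond R a b E D c]) (Gseq a b))%:Z.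
Proof.
move=> a0 b0 sD sE.
have DG := sD.1; have EG := sE.1.
under eq_bigr => i _ do under eq_bigr => j _ do rewrite mulrDr.
under eq_bigr => i _ do rewrite big_split.
rewrite big_split /=.
rewrite [X in _ + X = _]exchange_big /=.
rewrite -big_split /=.
under eq_bigr => i _ do rewrite -big_split /=.
transitivity (\sum_(i <- Gseq a b) \sum_(j <- Gseq a b)
   (bz (D i) * (bz (E j) * dc a b j.1 i.2 i.1 j.2) +
    bz (E j) * (bz (D i) * dc a b i.1 j.2 j.1 i.2))).
  apply: eq_bigr => -[xi yi] _; apply: eq_bigr => -[xj yj] _.
  case Di: (D (xi, yi)); last by rewrite /bz /= !(mulr0, mul0r, addr0).
  case Ej: (E (xj, yj)); last by rewrite /bz /= !(mulr0, mul0r, addr0).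
  have [xi0 yi0 _ _] := inG_facts a0 b0 (DG _ Di).
  have [xj0 yj0 _ _] := inG_facts a0 b0 (EG _ Ej).
  rewrite /bz /= !mul1r !mulr1.
  case: xi xi0 Di => // u _ _; case: yi yi0 => // v _.
  case: xj xj0 Ej => // p _ _; case: yj yj0 => // q _.
  by rewrite kernel.
under eq_bigr => i _ do rewrite big_split.
rewrite big_split /= (core R a0 b0 sD sE); congr (_ + _).
rewrite exchange_big /=.
have -> : count (fun c => [&& D c, E c & slope_cond R a b E D c]) (Gseq a b) =
  count (fun c => [&& E c, D c & slope_cond R a b E D c]) (Gseq a b).
  by apply: eq_count => c; rewrite andbA [D c && E c]andbC -andbA.
rewrite -(core R a0 b0 sE sD).
apply: eq_bigr => j _; apply: eq_bigr => i _; by rewrite mulrCA.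
Qed.

Lemma intr_sum (R : realFieldType) (T : Type) (s : seq T) (F : T -> int) :
  (\sum_(i <- s) F i)%:~R = \sum_(i <- s) (F i)%:~R :> R.
Proof.
elim: s => [|x s IH]; first by rewrite !big_nil.
by rewrite !big_cons intrD IH.
Qed.

Theorem theorem1p2 (R : realFieldType) (a b : nat) :
  (1 < a)%N -> (a < b)%N -> coprime a b ->
  forall D E : pred cell, subdiagram a b D -> subdiagram a b E ->
  @Bform R a b (indic R D) (indic R E) = dinv R a b D E.
Proof.
move=> a1 ab _ D E sD sE.
have a0 : (0 < a)%N by lia.
have b0 : (0 < b)%N by lia.
rewrite /Bform /dinv; congr (_ * _).
have -> : forall n : nat, n%:R = (n%:Z)%:~R :> R by [].
have -> : forall n : nat, n%:R = (n%:Z)%:~R :> R by [].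
rewrite -intrD -(main_int R a0 b0 sD sE) intr_sum.
apply: eq_bigr => i _; rewrite intr_sum; apply: eq_bigr => j _.
rewrite intrM /indic /bz.
by congr (_ * _); rewrite intrD !intrM.
Qed.
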